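(* Let $\mathcal{F}\subseteq[\omega]^{<\omega}$ be a compact hereditary family covering $\omega$. A vector $y\in X^{\mathcal{F}}$ is an extreme point of the unit ball $B_{X^\mathcal{F}}=\{x\in X^\mathcal{F}:\lVert x\rVert^\mathcal{F}\le1\}$ if and only if there are $F\in\mathcal{F}^{MAX}$ and signs $\varepsilon_i\in\{-1,1\}$ ($i\in F$) such that $y(i)=\varepsilon_i$ for $i\in F$ and $y(i)=0$ for $i\notin F$.
   Context: $\omega=\{1,2,3,\dots\}$; $[\omega]^{<\omega}$ is the family of finite subsets of $\omega$, identified with elements of $2^\omega$; compact means compact in $2^\omega$; hereditary means closed under subsets. A partition is a family $\mathcal{P}\subseteq\mathcal{P}(\omega)$ with $\emptyset\in\mathcal{P}$, $\bigcup\mathcal{P}=\omega$, elements pairwise disjoint; $\mathbb{P}_\mathcal{F}$ is the set of partitions contained in $\mathcal{F}$. For $x\in\mathbb{R}^\omega$, $\lVert x\rVert^{\mathcal{F}}=\inf_{\mathcal{P}\in\mathbb{P}_\mathcal{F}}\sum_{F\in\mathcal{P}}\sup_{k\in F}|x(k)|$. $X^\mathcal{F}=\{x\in\mathbb{R}^\omega:\lim_n\lVert P_{\omega\setminus n}x\rVert^\mathcal{F}=0\}$, where $P_{\omega\setminus n}x$ agrees with $x$ on $\{n+1,\dots\}$ and is zero elsewhere. $\mathcal{F}^{MAX}$ is the set of maximal elements of $\mathcal{F}$, i.e. $F\in\mathcal{F}$ with $F\cup\{k\}\notin\mathcal{F}$ for every $k\in\omega\setminus F$. A point $e$ of a set $K$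 (not necessarily convex) is an extreme point of $K$ if there are no $x,z\in K$ different from $e$ and $t\in(0,1)$ with $e=(1-t)x+tz$. *)

(* Defs.v *)
From HB Require Import structures.
From mathcomp Require Import all_boot all_order all_algebra.
From mathcomp Require Import all_classical all_reals all_analysis.
Set Implicit Arguments. Unset Strict Implicit. Unset Printing Implicit Defensive.
Import Order.TTheory GRing.Theory Num.Theory.
Local Open Scope classical_set_scope.
Local Open Scope ring_scope.

(* omega is modelled by nat (0-based relabelling of {1,2,3,...}) *)
Definition nat_family := set (set nat).

Definition finite_family (F : nat_family) : Prop := forall A, F A -> finite_set A.

Definition hereditary (F : nat_family) : Prop :=
  forall A B, F A -> B `<=` A -> F B.

Definition covers_omega (F : nat_family) : Prop := \bigcup_(A in F) A = [set: nat].

(* identification of subsets of omega with points of 2^omega *)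
Definition to_cantor (A : set nat) : cantor_space := fun n => `[< A n >].

Definition compact_family (F : nat_family) : Prop := compact (to_cantor @` F).

Definition is_partition (P : nat_family) : Prop :=
  [/\ P set0, \bigcup_(A in P) A = [set: nat] &
      forall A B, P A -> P B -> A <> B -> A `&` B = set0].

(* sup_{k in A} |x k|, with the sup over the empty set equal to 0 *)
Definition supabs {R : realType} (x : nat -> R) (A : set nat) : \bar R :=
  ereal_sup ([set 0%E] `|` [set (`|x k|)%:E | k in A]).

Definition normF {R : realType} (F : nat_family) (x : nat -> R) : \bar R :=
  ereal_inf [set (\esum_(A in P) supabs x A) | P in [set P | is_partition P /\ P `<=` F]].

Definition tail {R : realType} (n : nat) (x : nat -> R) : nat -> R :=
  fun k => if (n < k)%N then x k else 0.

Definition XF {R : realType} (F : nat_family) : set (nat -> R) :=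
  [set x | (fun n => normF F (tail n x)) @ \oo --> 0%E].

Definition unit_ball {R : realType} (F : nat_family) : set (nat -> R) :=
  [set x | XF F x /\ (normF F x <= 1)%E].

Definition extreme_point {R : realType} (K : set (nat -> R)) (e : nat -> R) : Prop :=
  K e /\ ~ (exists x z (t : R), K x /\ K z /\ x <> e /\ z <> e /\ (0 < t < 1) /\
                                  e = (fun k => (1 - t) * x k + t * z k)).

Definition maximal_elt (F : nat_family) (A : set nat) : Prop :=
  F A /\ forall k, ~ A k -> ~ F (A `|` [set k]).

(* Main.v *)
Require Import Defs.
From HB Require Import structures.
From mathcomp Require Import all_boot all_order all_algebra.
From mathcomp Require Import all_classical all_reals all_analysis.
From mathcomp Require Import ring lra.
Import Order.TTheory GRing.Theory Num.Theory.
Local Open Scope classical_set_scope.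
Local Open Scope ring_scope.
Set Implicit Arguments. Unset Strict Implicit. Unset Printing Implicit Defensive.

Section Basics.
Variable R : realType.
Implicit Types (y x : nat -> R) (A B : set nat).

Lemma supabs_ge0 y A : (0 <= supabs y A)%E.
Proof. by apply: ereal_sup_ubound; left. Qed.

Lemma supabs_ge y A k : A k -> ((`|y k|)%:E <= supabs y A)%E.
Proof. by move=> Ak; apply: ereal_sup_ubound; right; exists k. Qed.

Lemma supabs_le y A c : 0 <= c -> (forall k, A k -> `|y k| <= c) ->
  (supabs y A <= c%:E)%E.
Proof.
move=> c0 H; apply: ge_ereal_sup => z [->|[k Ak <-]]; rewrite ?lee_fin //.
exact: H.
Qed.

Lemma supabs_sub y A B : A `<=` B -> (supabs y A <= supabs y B)%E.
Proof.
move=> AB; apply: ereal_sup_le => z [->|[k Ak <-]]; [by left|right].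
by exists k => //; apply: AB.
Qed.

Lemma supabs0 y A : (forall k, A k -> y k = 0) -> supabs y A = 0%E.
Proof.
move=> H; apply/eqP; rewrite eq_le supabs_ge0 andbT.
by apply: supabs_le => // k /H ->; rewrite normr0.
Qed.

Lemma esum_ge1 (T : choiceType) (S : set T) (f : T -> \bar R) t :
  S t -> (forall u, S u -> 0 <= f u)%E -> (f t <= \esum_(u in S) f u)%E.
Proof.
move=> St f0; apply: esum_ge; exists [set t].
  by split; [exact: finite_set1| move=> u ->].
by rewrite fsbig_set1.
Qed.

Lemma esum_split1 (T : choiceType) (S : set T) (f : T -> \bar R) t :
  S t -> (forall u, S u -> 0 <= f u)%E ->
  \esum_(u in S) f u = (f t + \esum_(u in S `&` ~` [set t]) f u)%E.
Proof.
move=> St f0; rewrite (esumID [set t]) //.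
have -> : S `&` [set t] = [set t].
  by apply/seteqP; split => u; [case| move=> -> ].
by rewrite esum_set1 //; apply: f0.
Qed.

End Basics.


Lemma disj_of (T : Type) (A B : set T) : (forall u, A u -> B u -> False) -> A `&` B = set0.
Proof. by move=> H; apply/seteqP; split => u // [/H]. Qed.

Section Part.
Variable R : realType.
Variable F : nat_family.
Hypothesis hher : hereditary F.
Hypothesis hcov : covers_omega F.

Lemma singleF k : F [set k].
Proof.
have : (\bigcup_(A in F) A) k by rewrite hcov.
case=> A FA Ak. apply: (hher FA).
by move=> u ->.
Qed.

Lemma set0F : F set0.
Proof. by apply: (hher (singleF 0)). Qed.

Lemma part_uniq P D D' k : is_partition P -> P D -> P D' -> D k -> D' k -> D = D'.
Proof.
case=> _ _ Hd PD PD' Dk D'k; apply: contrapT => neq.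
have := Hd _ _ PD PD' neq; rewrite -subset0 => /(_ k); apply; by split.
Qed.

Lemma part_block P k : is_partition P -> exists2 D, P D & D k.
Proof.
case=> _ Hu _; have : (\bigcup_(A in P) A) k by rewrite Hu.
by case=> D PD Dk; exists D.
Qed.

Definition PG (G : set nat) : nat_family :=
  [set D | D = set0 \/ D = G \/ exists j, ~ G j /\ D = [set j]].

Lemma PG_part G : is_partition (PG G).
Proof.
split; first by left.
  apply/seteqP; split => // j _; case: (pselect (G j)) => Gj.
    by exists G => //; right; left.
  by exists [set j] => //; right; right; exists j.
move=> A B HA HB AB; apply: disj_of => u Au Bu; apply: AB.
case: HA => [HA|[HA|[j [Gj HA]]]]; subst A => //.
  case: HB => [HB|[HB|[j [Gj HB]]]]; subst B => //.
  by move: Bu => /= Eu; subst u.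
case: HB => [HB|[HB|[j' [Gj' HB]]]]; subst B => //.
  by move: Au => /= Eu; subst u.
by move: Au Bu => /= -> ->.
Qed.

Lemma PG_sub G : F G -> PG G `<=` F.
Proof.
move=> FG D [->|[->|[j [_ ->]]]] //; [exact: set0F|exact: singleF].
Qed.

Lemma normF_le_part (x : nat -> R) P : is_partition P -> P `<=` F ->
  (normF F x <= \esum_(A in P) supabs x A)%E.
Proof. by move=> H1 H2; apply: ereal_inf_lbound; exists P. Qed.

Lemma normF_ge0 (x : nat -> R) : (0 <= normF F x)%E.
Proof.
apply: le_ereal_inf_tmp => _ [P _ <-]; apply: esum_ge0 => A _.
exact: supabs_ge0.
Qed.

Lemma normF_single G (x : nat -> R) c : F G -> 0 <= c ->
  (forall j, ~ G j -> x j = 0) -> (forall j, G j -> `|x j| <= c) ->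
  (normF F x <= c%:E)%E.
Proof.
move=> FG c0 Hout Hin.
have H1 := @normF_le_part x (PG G) (PG_part G) (@PG_sub G FG).
apply: (le_trans H1).
rewrite (@esum_split1 R _ _ _ G); last 2 first.
- by right; left.
- by move=> u _; exact: supabs_ge0.
rewrite esum1 ?adde0; first exact: supabs_le.
move=> D [HD nDG]; case: HD => [->|[HDG|[j [Gj ->]]]].
- by apply: supabs0.
- by exfalso; apply: nDG.
- by apply: supabs0 => k -> ; exact: Hout.
Qed.

End Part.


Section Ext.
Variable R : realType.
Variable F : nat_family.

Lemma XF_add (y d : nat -> R) N : XF F y -> (forall k, (N <= k)%N -> d k = 0) ->
  XF F (fun k => y k + d k).
Proof.
move=> hy hd; rewrite /XF /=.
have E : {near \oo, (fun n => normF F (tail n y)) =1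
                    (fun n => normF F (tail n (fun k => y k + d k)))}.
  exists N => // n /= Nn; congr normF; apply: funext => k; rewrite /tail.
  case: ifP => // nk; rewrite hd ?addr0 //.
  by apply: leq_trans Nn (ltnW nk).
exact: cvg_trans (near_eq_cvg E) hy.
Qed.

Lemma not_extreme (y d : nat -> R) k :
  unit_ball F (fun j => y j + d j) -> unit_ball F (fun j => y j - d j) ->
  d k != 0 -> ~ extreme_point (unit_ball F) y.
Proof.
move=> B1 B2 dk [_ H]; apply: H.
exists (fun j => y j + d j), (fun j => y j - d j), (1/2).
do 2 (split => //); split.
  move=> /(congr1 (fun f => f k)) => /eqP; apply/negP.
  by rewrite -subr_eq0 (_ : _ + _ - _ = d k) //; lra.
split.
  move=> /(congr1 (fun f => f k)) => /eqP; apply/negP.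
  rewrite -subr_eq0 (_ : _ - _ - _ = - d k); last by lra.
  by rewrite oppr_eq0.
split; first by apply/andP; split; lra.
by apply: funext => j; lra.
Qed.

End Ext.


Section Back.
Variable R : realType.
Variable F : nat_family.
Hypothesis hher : hereditary F.
Hypothesis hcov : covers_omega F.

Lemma two_blocks (x : nat -> R) P B C : P B -> P C -> B <> C ->
  (supabs x B + supabs x C <= \esum_(D in P) supabs x D)%E.
Proof.
move=> PB PC BC; rewrite (esum_split1 PB); last by move=> *; exact: supabs_ge0.
apply: leeD => //; apply: esum_ge1; first by split => // /= CB; apply: BC.
by move=> *; exact: supabs_ge0.
Qed.

Lemma normF_ge_coord (x : nat -> R) i : ((`|x i|)%:E <= normF F x)%E.
Proof.
apply: le_ereal_inf_tmp => _ [P [HP _] <-].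
have [B PB Bi] := part_block i HP.
apply: le_trans (supabs_ge x Bi) _.
by apply: esum_ge1 => // *; exact: supabs_ge0.
Qed.

Lemma maximal_nonempty A : maximal_elt F A -> exists a, A a.
Proof.
move=> [FA HA]; apply: contrapT => nA.
apply: (HA 0); first by move=> A0; apply: nA; exists 0.
apply: (hher (singleF hher hcov 0)) => u [Au|//].
by exfalso; apply: nA; exists u.
Qed.

Lemma maximal_forces (A : set nat) (x : nat -> R) : maximal_elt F A ->
  (forall i, A i -> `|x i| = 1) -> (normF F x <= 1)%E ->
  forall j, ~ A j -> x j = 0.
Proof.
move=> mA Hx Hn j nAj; apply: contrapT => /eqP xj.
have [a0 Aa0] := maximal_nonempty mA.
set m := Num.min (`|x j|) 1.
have m0 : 0 < m by rewrite /m lt_min normr_gt0 xj ltr01.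
have m1 : m <= 1 by rewrite /m ge_min lexx orbT.
have mj : m <= `|x j| by rewrite /m ge_min lexx.
have : (normF F x < (1 + m)%:E)%E.
  by apply: le_lt_trans Hn _; rewrite lte_fin ltrDl.
move=> /ereal_inf_lt [_ [P [HP PF] <-]].
apply/negP; rewrite -leNgt.
have [B PB Ba0] := part_block a0 HP.
have fB : (1%:E <= supabs x B)%E by rewrite -(Hx _ Aa0); exact: supabs_ge.
case: (pselect (A `<=` B)) => AB.
  have nBj : ~ B j.
    move=> Bj; apply: ((proj2 mA) j nAj); apply: (hher (PF _ PB)).
    by move=> u [/AB|->].
  have [C PC Cj] := part_block j HP.
  apply: le_trans (two_blocks x PB PC _).
    rewrite EFinD; apply: leeD => //.
    by apply: le_trans (supabs_ge x Cj); rewrite lee_fin.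
  by move=> BC; subst C.
have [a1 /not_implyP [Aa1 nBa1]] := (existsNP _).2 AB.
have [C PC Ca1] := part_block a1 HP.
apply: le_trans (two_blocks x PB PC _).
  rewrite EFinD; apply: leeD => //.
  by apply: le_trans (supabs_ge x Ca1); rewrite Hx // lee_fin.
by move=> BC; subst C.
Qed.

Lemma extreme_of_maximal (A : set nat) (y eps : nat -> R) :
  XF F y -> maximal_elt F A ->
  (forall i, A i -> eps i = 1 \/ eps i = -1) ->
  (forall i, A i -> y i = eps i) -> (forall i, ~ A i -> y i = 0) ->
  extreme_point (unit_ball F) y.
Proof.
move=> hy mA Heps Hin Hout.
have Hy1 : forall i, A i -> `|y i| = 1.
  by move=> i Ai; rewrite Hin //; case: (Heps i Ai) => ->; rewrite ?normrN normr1.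
split.
  split => //; apply: (normF_single hher hcov (proj1 mA)) => //.
  by move=> i /Hy1 ->.
move=> [x [z [t [[_ Bx] [[_ Bz] [xy [zy [/andP [t0 t1] E]]]]]]]].
apply: xy.
have Hxi : forall i, A i -> x i = y i.
  move=> i Ai.
  have hx : `|x i| <= 1 by rewrite -lee_fin; exact: le_trans (normF_ge_coord x i) Bx.
  have hz : `|z i| <= 1 by rewrite -lee_fin; exact: le_trans (normF_ge_coord z i) Bz.
  have Ei := congr1 (fun f => f i) E; move: Ei => /= Ei.
  move: hx hz; rewrite !ler_norml => /andP [hx1 hx2] /andP [hz1 hz2].
  rewrite Hin // in Ei *.
  case: (Heps i Ai) => e; rewrite e in Ei *; nra.
have Hx1 : forall i, A i -> `|x i| = 1 by move=> i Ai; rewrite Hxi // Hy1.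
apply: funext => j; case: (pselect (A j)) => Aj; first exact: Hxi.
by rewrite Hout // (maximal_forces mA Hx1 Bx).
Qed.

End Back.


Lemma nbhs_coord (g : cantor_space) i : nbhs g [set f : cantor_space | f i = g i].
Proof.
have H := @proj_continuous nat (fun _ => bool) i g.
have := H [set g i] (discrete_set1 (g i)).
by [].
Qed.

Lemma to_cantor_inj (A B : set nat) : to_cantor A = to_cantor B -> A = B.
Proof.
move=> E; apply: funext => i; apply: propext.
have := congr1 (fun f => f i) E; rewrite /to_cantor /=.
by case: (asboolP (A i)); case: (asboolP (B i)).
Qed.

Lemma closedF (F : nat_family) (B : set nat) : compact_family F ->
  (forall K, F (B `&` [set i | (i < K)%N])) -> F B.
Proof.
move=> hc HB.
set C := to_cantor @` F.
pose U K := C `&` [set f : cantor_space | forall i, (i < K)%N -> f i = to_cantor B i].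
pose G := filter_from [set: nat] U.
have GF : Filter G.
  apply: filter_from_filter; first by exists 0.
  move=> i j _ _; exists (maxn i j) => // f [Cf Hf]; split; split => // k Hk;
  apply: Hf; rewrite leq_max Hk ?orbT //.
have GP : ProperFilter G.
  apply: filter_from_proper => K _.
  exists (to_cantor (B `&` [set i | (i < K)%N])); split; first by exists (B `&` [set i | (i < K)%N]).
  move=> i iK; rewrite /to_cantor; congr asbool; apply: propext; split; first by case.
  by move=> Bi; split.
have GC : G C by exists 0 => // f [].
have [g [Cg clg]] := hc G GP GC.
have -> : B = (fun i => g i).
  apply: funext => i; apply: propext.
  have [f [[_ Hf] Hfg]] := clg (U i.+1) _ (ex_intro2 _ _ i.+1 I (fun _ h => h)) (nbhs_coord g i).
  move: (Hf i (ltnSn i)); rewrite /= in Hfg; rewrite Hfg /to_cantor => ->.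
  by split => [/asboolP|?]; [|apply/asboolP].
case: Cg => D FD Dg.
have -> : (fun i => is_true (g i)) = D.
  apply: funext => i; apply: propext; rewrite -Dg /to_cantor.
  by split => /asboolP.
exact: FD.
Qed.


Lemma fin_bound b (Q : nat -> nat -> Prop) :
  (forall m N N', (N <= N')%N -> Q m N -> Q m N') ->
  (forall m, (m < b)%N -> exists N, Q m N) -> exists N, forall m, (m < b)%N -> Q m N.
Proof.
move=> Qmon; elim: b => [|b IH] H; first by exists 0.
have [N1 H1] := IH (fun m mb => H m (ltnW mb)).
have [N2 H2] := H b (ltnSn b).
exists (maxn N1 N2) => m; rewrite ltnS leq_eqVlt => /orP [/eqP ->|mb].
  by apply: Qmon H2; rewrite leq_maxr.
by apply: Qmon (H1 m mb); rewrite leq_maxl.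
Qed.

Section Konig.
Variable c : nat -> nat -> nat.
Hypothesis cle : forall n i, (c n i <= i)%N.

Definition Good (s : seq nat) := forall N, exists n, (N <= n)%N /\
  forall i, (i < size s)%N -> c n i = nth 0 s i.

Lemma good_ext s : Good s -> exists m, Good (rcons s m).
Proof.
move=> Gs; apply: contrapT => H.
pose Q m N := forall n, (N <= n)%N ->
  ~ (forall i, (i < size (rcons s m))%N -> c n i = nth 0 (rcons s m) i).
have [N HN] : exists N, forall m, (m < (size s).+1)%N -> Q m N.
  apply: fin_bound.
    by move=> m N N' NN' HQ n N'n; apply: HQ; apply: leq_trans N'n.
  move=> m _; apply: contrapT => HQ; apply: H; exists m => N.
  apply: contrapT => HN; apply: HQ; exists N => n Nn Hag; apply: HN.
  by exists n.
have [n [Nn Hn]] := Gs N.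
have Hm : (c n (size s) < (size s).+1)%N by rewrite ltnS cle.
apply: (HN _ Hm n Nn).
move=> i; rewrite size_rcons ltnS nth_rcons leq_eqVlt => /orP [/eqP ->|iss].
  by rewrite ltnn eqxx.
by rewrite iss; exact: Hn.
Qed.

Definition nx (s : seq nat) : nat := [get m | Good (rcons s m)].

Fixpoint pref k := if k is k'.+1 then rcons (pref k') (nx (pref k')) else [::].

Lemma good_pref k : Good (pref k).
Proof.
elim: k => [|k IH] /=; first by move=> N; exists N; split.
exact: (getPex (good_ext IH)).
Qed.

Lemma size_pref k : size (pref k) = k.
Proof. by elim: k => //= k IH; rewrite size_rcons IH. Qed.

Lemma nth_pref k d i : (i < k)%N -> nth 0 (pref (k + d)) i = nth 0 (pref k) i.
Proof.
move=> ik; elim: d => [|d IH]; first by rewrite addn0.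
by rewrite addnS /= nth_rcons size_pref (ltn_addr _ ik).
Qed.

Definition climit i := nth 0 (pref i.+1) i.

Lemma climitP K N : exists n, (N <= n)%N /\ forall i, (i < K)%N -> c n i = climit i.
Proof.
have [n [Nn Hn]] := good_pref K N.
exists n; split => // i iK; rewrite Hn ?size_pref // /climit.
by rewrite -(subnKC iK) nth_pref.
Qed.

End Konig.


Lemma fin_nat_bound (S : set nat) : finite_set S -> exists K, forall j, S j -> (j < K)%N.
Proof.
move=> /finite_fsetP [X ->]; exists (\max_(j <- finmap.enum_fset X) j).+1 => j /= jX.
by rewrite ltnS; apply: (@leq_bigmax_seq _ _ _ (fun j => j)).
Qed.

Lemma exmin (D : set nat) i : D i -> exists m, D m /\ forall k, D k -> (m <= k)%N.
Proof.
move=> Di; apply: contrapT => H.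
suff : forall n k, (k <= n)%N -> ~ D k by move=> /(_ i i (leqnn i)).
elim=> [|n IH] k kn Dk.
  apply: H; exists k; split => // k' _; move: kn; rewrite leqn0 => /eqP ->.
  exact: leq0n.
apply: H; exists k; split => // k' Dk'; rewrite leqNgt; apply/negP => k'k.
by apply: (IH k') => //; rewrite -ltnS (leq_trans k'k kn).
Qed.

Lemma esum_sub (R : realType) (T : choiceType) (S S' : set T) (f : T -> \bar R) :
  S `<=` S' -> (forall u, S' u -> 0 <= f u)%E ->
  (\esum_(u in S) f u <= \esum_(u in S') f u)%E.
Proof.
move=> SS' f0; apply: ge_ereal_sup => _ [X [finX XS] <-].
by apply: esum_ge; exists X => //; split => // u /XS /SS'.
Qed.

Lemma inv_small (R : realType) (e : R) : 0 < e -> exists N : nat, N.+1%:R^-1 <= e.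
Proof.
move=> e0; exists (Num.Def.trunc e^-1).
have h := truncnS_gt e^-1.
have hN : 0 < (Num.Def.trunc e^-1).+1%:R :> R by rewrite ltr0n.
rewrite -div1r ler_pdivrMr //.
have : e * e^-1 < e * (Num.Def.trunc e^-1).+1%:R by rewrite ltr_pM2l.
rewrite mulfV ?gt_eqF //; exact: ltW.
Qed.

Section Attain.
Variable R : realType.
Variable F : nat_family.
Hypothesis hfin : finite_family F.
Hypothesis hcomp : compact_family F.
Hypothesis hher : hereditary F.
Hypothesis hcov : covers_omega F.

Lemma attain (y : nat -> R) : (normF F y < +oo)%E ->
  exists P, [/\ is_partition P, P `<=` F &
                (\esum_(A in P) supabs y A <= normF F y)%E].
Proof.
move=> ylt.
have vfin : normF F y \is a fin_num by rewrite ge0_fin_numE // normF_ge0.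
have HP : forall n : nat, exists P, (is_partition P /\ P `<=` F) /\
   (\esum_(A in P) supabs y A < normF F y + (n.+1%:R^-1)%:E)%E.
  move=> n.
  have n0 : 0 < n.+1%:R^-1 :> R by rewrite invr_gt0 ltr0n.
  have [_ [P HP1 <-] Hlt] := lb_ereal_inf_adherent n0 vfin.
  by exists P.
have [Pn HPn] := choice HP.
have Pnp : forall n, is_partition (Pn n) by move=> n; case: (HPn n) => [[]].
have PnF : forall n, Pn n `<=` F by move=> n; case: (HPn n) => [[]].
have Hc : forall ni : nat * nat, exists m, exists D,
    [/\ Pn ni.1 D, D ni.2, D m & forall k, D k -> (m <= k)%N].
  move=> [n i]; have [D PD Di] := part_block i (Pnp n).
  by have [m [Dm Hm]] := exmin Di; exists m, D.
have [cc Hcc] := choice Hc.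
pose c n i := cc (n, i).
have cle : forall n i, (c n i <= i)%N.
  by move=> n i; have [D [_ Di _ Hm]] := Hcc (n, i); exact: Hm.
have blk : forall n i, Pn n [set j | c n j = c n i].
  move=> n i; have [D [PD Di Dm Hm]] := Hcc (n, i).
  suff -> : [set j | c n j = c n i] = D by [].
  apply/seteqP; split => j /=.
  - move=> cji; have [Dj [PDj Djj Djm Hmj]] := Hcc (n, j).
    have E : Dj = D.
      apply: (part_uniq (Pnp n) PDj PD Djm); rewrite /= -/(c n j) cji; exact: Dm.
    by rewrite -E.
  - move=> Dj; have [Dj' [PDj Djj Djm Hmj]] := Hcc (n, j).
    have E : Dj' = D by apply: (part_uniq (Pnp n) PDj PD Djj Dj).
    rewrite E in Djm Hmj.
    by apply/eqP; rewrite eqn_leq (Hmj _ Dm) (Hm _ Djm).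
pose cl := climit c.
have clP : forall K N, exists n, (N <= n)%N /\ forall i, (i < K)%N -> c n i = cl i.
  exact: climitP cle.
pose E i := [set j | cl j = cl i].
pose Pc := [set D | D = set0 \/ exists i, D = E i].
have EE : forall i i' u, E i u -> E i' u -> E i = E i'.
  rewrite /E /= => i i' u ui ui'; apply/seteqP; split => j /= h.
    by rewrite h -ui ui'.
  by rewrite h -ui' ui.
have Pcp : is_partition Pc.
  split; first by left.
  - apply/seteqP; split => // j _; exists (E j); [by right; exists j | by []].
  - move=> A B HA HB AB; apply: disj_of => u Au Bu; apply: AB.
    case: HA => [HA|[i HA]]; subst A => //.
    case: HB => [HB|[i' HB]]; subst B => //.
    exact: EE Au Bu.
have EF : forall i, F (E i).
  move=> i; apply: (closedF hcomp) => K.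
  have [n [_ Hn]] := clP (maxn K i.+1) 0.
  apply: (hher (PnF n _ (blk n i))) => j [/= Ej jK].
  rewrite (Hn j) ?(Hn i) ?Ej // leq_max ?jK ?ltnSn ?orbT //.
have PcF : Pc `<=` F.
  by move=> D [->|[i ->]]; [exact: set0F hher hcov | exact: EF].
exists Pc; split => //.
apply/lee_addgt0Pr => e e0.
have [N hN] := inv_small e0.
apply: (@le_trans _ _ (normF F y + (N.+1%:R^-1)%:E)%E); last by rewrite leeD2l // lee_fin.
apply: ge_ereal_sup => _ [X [finX XPc] <-].
have XF : forall D, X D -> finite_set D by move=> D /XPc /PcF /hfin.
have [K HK] : exists K, forall D j, X D -> D j -> (j < K)%N.
  have [K HK] := fin_nat_bound (bigcup_finite finX XF).
  by exists K => D j XD Dj; apply: HK; exists D.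
have [n [Nn Hn]] := clP K N.
pose phi (D : set nat) := [set j | exists2 i, D i & c n j = c n i].
have f0 : forall D, (0 <= supabs y D)%E by move=> D; exact: supabs_ge0.
rewrite -esum_fset //.

apply: (@le_trans _ _ (\esum_(D in X) supabs y (phi D))%E).
  by apply: le_esum => D XD; apply: supabs_sub => j Dj; exists j.
have phiE : forall i, X (E i) -> phi (E i) = [set j | c n j = c n i].
  move=> i XE; apply/seteqP; split => j /=.
    move=> [i' Ei' ->]; rewrite (Hn i') ?(Hn i) //; first exact: (HK _ i XE).
    exact: (HK _ i' XE).
  by move=> h; exists i.
have phi0 : phi set0 = set0 by apply/seteqP; split => j // [].
have inj : set_inj X phi.
  move=> D D' /set_mem XD /set_mem XD' Ephi.
  case: (XPc D XD) => [HD|[i HD]]; case: (XPc D' XD') => [HD'|[i' HD']]; subst D D' => //.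
  - exfalso; move: Ephi; rewrite phi0 phiE // => /seteqP [_ /(_ i' erefl)] //.
  - exfalso; move: Ephi; rewrite phi0 phiE // => /seteqP [/(_ i erefl)] //.
  - move: Ephi; rewrite !phiE // => /seteqP [/(_ i erefl)] /= h _.
    apply: (EE i i' i) => //; rewrite /E /= -(Hn i) ?h ?Hn //.
      exact: (HK _ i' XD').
    exact: (HK _ i XD).
rewrite -(esum_image X phi (supabs y) inj).
apply: (@le_trans _ _ (\esum_(D in Pn n) supabs y D)%E).
  apply: esum_sub => //.
  move=> _ [D XD <-]; case: (XPc D XD) => [HD|[i HD]]; subst D.
    by rewrite phi0; case: (Pnp n).
  by rewrite phiE //.
have [_ Hlt] := HPn n.
apply: (le_trans (ltW Hlt)); rewrite leeD2l // lee_fin lef_pV2 ?posrE ?ltr0n //.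
by rewrite ler_nat ltnS.
Qed.
End Attain.


Lemma supabs_le_of (R : realType) (x y : nat -> R) D :
  (forall k, D k -> ((`|x k|)%:E <= supabs y D)%E) -> (supabs x D <= supabs y D)%E.
Proof.
move=> H; apply: ge_ereal_sup => z [->|[k Dk <-]]; last exact: H.
exact: supabs_ge0.
Qed.

Lemma fin_support_bound (R : realType) (d : nat -> R) (S : set nat) :
  finite_set S -> (forall k, ~ S k -> d k = 0) ->
  exists N, forall k, (N <= k)%N -> d k = 0.
Proof.
move=> fS H; have [N HN] := fin_nat_bound fS.
exists N => k Nk; apply: H => Sk; have := HN k Sk; rewrite ltnNge Nk.
by [].
Qed.

Section Forward.
Variable R : realType.
Variable F : nat_family.
Hypothesis hfin : finite_family F.
Hypothesis hher : hereditary F.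
Hypothesis hcov : covers_omega F.

Lemma ball_of_dom (y x : nat -> R) P : is_partition P -> P `<=` F ->
  (\esum_(A in P) supabs y A <= 1)%E -> XF F x ->
  (forall D k, P D -> D k -> ((`|x k|)%:E <= supabs y D)%E) ->
  unit_ball F x.
Proof.
move=> HP PF H1 Hx Hd; split => //.
apply: le_trans (normF_le_part x HP PF) _; apply: le_trans H1.
by apply: le_esum => D PD; apply: supabs_le_of => k Dk; exact: Hd.
Qed.

Lemma notin_other P D B k : is_partition P -> P D -> P B -> D <> B -> D k -> ~ B k.
Proof. by move=> HP PD PB DB Dk Bk; apply: DB; exact: part_uniq HP PD PB Dk Bk. Qed.

Lemma twoblock (y : nat -> R) P B1 B2 l1 l2 a b :
  is_partition P -> P `<=` F -> (\esum_(A in P) supabs y A <= 1)%E -> XF F y ->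
  P B1 -> P B2 -> B1 <> B2 ->
  supabs y B1 = l1%:E -> supabs y B2 = l2%:E ->
  (forall k, B1 k -> `|y k| = l1) -> (forall k, B2 k -> `|y k| = l2) ->
  -1 <= a -> -1 <= b -> a * l1 + b * l2 = 0 ->
  unit_ball F (fun k => y k + (if `[< B1 k >] then a * y k
                              else if `[< B2 k >] then b * y k else 0)).
Proof.
move=> HP PF H1 hy PB1 PB2 neq Ey1 Ey2 Hl1 Hl2 a1 b1 ab.
have l10 : 0 <= l1 by rewrite -lee_fin -Ey1 supabs_ge0.
have l20 : 0 <= l2 by rewrite -lee_fin -Ey2 supabs_ge0.
set x := fun k => _.
have xB1 : forall k, B1 k -> x k = (1 + a) * y k.
  by move=> k Bk; rewrite /x asboolT //; ring.
have xB2 : forall k, B2 k -> x k = (1 + b) * y k.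
  move=> k Bk; rewrite /x asboolF ?asboolT //; first ring.
  exact: (notin_other HP PB2 PB1 (fun e => neq (esym e)) Bk).
have xO : forall k, ~ B1 k -> ~ B2 k -> x k = y k.
  by move=> k n1 n2; rewrite /x !asboolF // addr0.
split.
  have [N HN] : exists N, forall k, (N <= k)%N -> x k - y k = 0.
    apply: (@fin_support_bound R _ (B1 `|` B2)).
      by rewrite finite_setU; split; apply: hfin; apply: PF.
    by move=> k Hk; rewrite xO ?subrr // => h; apply: Hk; [left|right].
  have -> : x = (fun k => y k + (x k - y k)) by apply: funext => k; ring.
  exact: XF_add hy HN.
apply: le_trans (normF_le_part x HP PF) _; apply: le_trans H1.
have P2' : (P `&` ~` [set B1]) B2 by split => // /= e; apply: neq.
have f0 : forall (z : nat -> R) u, (P `&` ~` [set B1]) u -> (0 <= supabs z u)%E.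
  by move=> z u _; exact: supabs_ge0.
rewrite (esum_split1 PB1) ?(esum_split1 P2') //; last by move=> *; exact: supabs_ge0.
rewrite [X in (_ <= X)%E](esum_split1 PB1) ?(esum_split1 P2') //; last by move=> *; exact: supabs_ge0.
rewrite Ey1 Ey2.
apply: (@le_trans _ _ ((l1 + a * l1)%:E + ((l2 + b * l2)%:E +
   \esum_(u in (P `&` ~` [set B1]) `&` ~` [set B2]) supabs y u))%E).
  { apply: leeD; last apply: leeD.
  - apply: supabs_le; first by nra.
    by move=> k Bk; rewrite xB1 // normrM Hl1 // ger0_norm; [lra|lra].
  - apply: supabs_le; first by nra.
    by move=> k Bk; rewrite xB2 // normrM Hl2 // ger0_norm; [lra|lra].
  - apply: le_esum => D [[PD /= nD1] /= nD2]; apply: supabs_le_of => k Dk.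
    rewrite xO; first exact: supabs_ge.
      exact: (notin_other HP PD PB1 nD1 Dk).
    exact: (notin_other HP PD PB2 nD2 Dk). }
  rewrite !addeA -!EFinD; apply: leeD => //; rewrite lee_fin; lra.
- by move=> *; exact: supabs_ge0.
- by move=> *; exact: supabs_ge0.
Qed.

Lemma ball_single (y d : nat -> R) G N : F G -> XF F y ->
  (forall k, (N <= k)%N -> d k = 0) ->
  (forall j, ~ G j -> y j + d j = 0) -> (forall j, G j -> `|y j + d j| <= 1) ->
  unit_ball F (fun j => y j + d j).
Proof.
move=> FG hy hd H0 H1; split; first exact: XF_add hy hd.
exact: (normF_single hher hcov FG ler01 H0 H1).
Qed.

Lemma forward (y : nat -> R) : compact_family F ->
  extreme_point (unit_ball F) y ->
  exists A, maximal_elt F A /\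
    exists eps : nat -> R,
      (forall i, A i -> eps i = 1 \/ eps i = -1) /\
      (forall i, A i -> y i = eps i) /\ (forall i, ~ A i -> y i = 0).
Proof.
move=> hc ext; have [[hy hn] _] := ext.
have [P [HP PF HPy]] := attain hfin hc hher hcov (le_lt_trans hn (ltry 1)).
have H1 := le_trans HPy hn.
have f0 : forall B, (0 <= supabs y B)%E by move=> B; exact: supabs_ge0.
have fle1 : forall B, P B -> (supabs y B <= 1)%E.
  by move=> B PB; apply: le_trans H1; apply: esum_ge1 PB _.
have fin : forall B, P B -> supabs y B = (fine (supabs y B))%:E.
  move=> B PB; rewrite fineK // ge0_fin_numE //.
  exact: le_lt_trans (fle1 B PB) (ltry 1).
case: (pselect (exists B i, [/\ P B, B i & ((`|y i|)%:E < supabs y B)%E])).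
  move=> [B [i [PB Bi hlt]]].
  set l := fine (supabs y B).
  have hl : `|y i| < l by rewrite -lte_fin -/l -(fin B PB).
  pose d k : R := if k == i then l - `|y i| else 0.
  have hd : forall k, (i.+1 <= k)%N -> d k = 0.
    by move=> k ik; rewrite /d ifF //; apply/negbTE; rewrite neq_ltn ik orbT.
  have dom : forall (x : nat -> R), (`|x i| <= l) -> (forall k, k != i -> x k = y k) ->
      forall D k, P D -> D k -> ((`|x k|)%:E <= supabs y D)%E.
    move=> x xi xo D k PD Dk; case: (eqVneq k i) => [ki|ki].
      subst k; have <- := part_uniq HP PB PD Bi Dk.
      by rewrite (fin B PB) lee_fin.
    by rewrite xo //; exact: supabs_ge.
  apply: False_ind; apply: (@not_extreme R F y d i) => //.
  - apply: (ball_of_dom HP PF H1); first exact: XF_add hy hd.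
    apply: dom; first by rewrite /d eqxx; apply: le_trans (ler_normD _ _) _;
      rewrite [`|l - _|]ger0_norm; lra.
    by move=> k ki; rewrite /d (negbTE ki) addr0.
  - apply: (ball_of_dom HP PF H1).
      by apply: (XF_add (d := fun k => - d k)) hy _ => k /hd ->; rewrite oppr0.
    apply: dom; first by rewrite /d eqxx; apply: le_trans (ler_normB _ _) _;
      rewrite [`|l - _|]ger0_norm; lra.
    by move=> k ki; rewrite /d (negbTE ki) subr0.
  - by rewrite /d eqxx subr_eq0 gt_eqF.
move=> nota.
have Heq : forall B i, P B -> B i -> (`|y i|)%:E = supabs y B.
  move=> B i PB Bi; apply/eqP; rewrite eq_le supabs_ge //=.
  by rewrite leNgt; apply/negP => h; apply: nota; exists B, i.
have Hl : forall B k, P B -> B k -> `|y k| = fine (supabs y B).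
  by move=> B k PB Bk; apply: EFin_inj; rewrite -fin // (Heq B k).
have nonempty : forall B, (0 < supabs y B)%E -> exists k, B k.
  move=> B pB; apply: contrapT => nB; move: pB; rewrite supabs0 ?ltxx //.
  by move=> k Bk; exfalso; apply: nB; exists k.
case: (pselect (exists B1 B2, [/\ P B1, P B2, B1 <> B2, (0 < supabs y B1)%E & (0 < supabs y B2)%E])).
  move=> [B1 [B2 [PB1 PB2 neq p1 p2]]].
  have E1 := fin B1 PB1; have E2 := fin B2 PB2.
  set l1 := fine (supabs y B1) in E1; set l2 := fine (supabs y B2) in E2.
  have l1p : 0 < l1 by rewrite -lte_fin -E1.
  have l2p : 0 < l2 by rewrite -lte_fin -E2.
  have Hl1 : forall k, B1 k -> `|y k| = l1 by move=> k Bk; exact: Hl.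
  have Hl2 : forall k, B2 k -> `|y k| = l2 by move=> k Bk; exact: Hl.
  pose de := Num.min l1 l2.
  have dep : 0 < de by rewrite lt_min l1p l2p.
  have de1 : de <= l1 by rewrite ge_min lexx.
  have de2 : de <= l2 by rewrite ge_min lexx orbT.
  pose a := de / l1; pose b := - (de / l2).
  have a0 : 0 <= a by rewrite divr_ge0 // ltW.
  have a1 : a <= 1 by rewrite ler_pdivrMr // mul1r.
  have b0 : 0 <= - b by rewrite opprK divr_ge0 // ltW.
  have b1 : - b <= 1 by rewrite opprK ler_pdivrMr // mul1r.
  have ab : a * l1 + b * l2 = 0.
    by rewrite /a /b mulNr !divfK ?gt_eqF // subrr.
  have hb1 := twoblock HP PF H1 hy PB1 PB2 neq E1 E2 Hl1 Hl2
     (ltac:(lra) : -1 <= a) (ltac:(lra) : -1 <= b) ab.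
  have hb2 := twoblock HP PF H1 hy PB1 PB2 neq E1 E2 Hl1 Hl2
     (ltac:(lra) : -1 <= - a) (ltac:(lra) : -1 <= - b)
     (ltac:(lra) : (- a) * l1 + (- b) * l2 = 0).
  pose d k := (if `[< B1 k >] then a * y k else if `[< B2 k >] then b * y k else 0).
  have [k0 Bk0] := nonempty B1 p1.
  apply: False_ind; apply: (@not_extreme R F y d k0) => //.
    rewrite (_ : (fun j => y j - d j) = fun j => y j + (if `[< B1 j >] then (- a) * y j
                  else if `[< B2 j >] then (- b) * y j else 0)) //.
    by apply: funext => j; rewrite /d; case: ifP => _; [|case: ifP => _]; ring.
  rewrite /d asboolT // mulf_neq0 //; first by rewrite gt_eqF // divr_gt0.
  by rewrite -normr_eq0 Hl1 // gt_eqF.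
move=> notb.
have zero_of : forall C k, P C -> C k -> ~ (0 < supabs y C)%E -> y k = 0.
  move=> C k PC Ck np.
  have : ((`|y k|)%:E <= 0)%E.
    by apply: le_trans (supabs_ge y Ck) _; rewrite leNgt; apply/negP.
  by rewrite lee_fin normr_le0 => /eqP.
case: (pselect (exists B, P B /\ (0 < supabs y B)%E)); last first.
  move=> noB.
  have y0 : forall k, y k = 0.
    move=> k; have [C PC Ck] := part_block k HP; apply: (zero_of C k) => // h.
    by apply: noB; exists C.
  pose d k : R := if k == 0%N then 1 else 0.
  have hd : forall k, (1 <= k)%N -> d k = 0 by move=> [|k] //.
  apply: False_ind; apply: (@not_extreme R F y d 0) => //.
  - apply: (@ball_single y d [set 0%N] 1) => //; first exact (singleF hher hcov 0).
      by move=> [|j] //= _; rewrite y0 add0r.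
    by move=> j /= ->; rewrite y0 /d eqxx add0r normr1.
  - apply: (@ball_single y (fun k => - d k) [set 0%N] 1) => //; first exact (singleF hher hcov 0).
      by move=> k /hd ->; rewrite oppr0.
      by move=> [|j] //= _; rewrite y0 /d /= oppr0 addr0.
    by move=> j /= ->; rewrite y0 /d eqxx add0r normrN normr1.
  - by rewrite /d eqxx oner_neq0.
move=> [B [PB pB]].
have E := fin B PB; set l := fine (supabs y B) in E.
have lp : 0 < l by rewrite -lte_fin -E.
have l1 : l <= 1 by rewrite -lee_fin -E fle1.
have yin : forall k, B k -> `|y k| = l by move=> k Bk; exact: Hl.
have yout : forall k, ~ B k -> y k = 0.
  move=> k nBk; have [C PC Ck] := part_block k HP; apply: (zero_of C k) => // pC.
  apply: notb; exists B, C; split => // BC; apply: nBk; by rewrite BC.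
have [k0 Bk0] := nonempty B pB.
have finB : finite_set B := hfin (PF _ PB).
case: (ltrP l 1) => hl.
  pose mu := (1 - l) / l.
  have mup : 0 < mu by rewrite divr_gt0 // subr_gt0.
  have mul : mu * l = 1 - l by rewrite /mu divfK // gt_eqF.
  pose d k := mu * y k.
  have [N hN] := @fin_support_bound R d B finB (fun k nk => ltac:(by rewrite /d yout // mulr0)).
  apply: False_ind; apply: (@not_extreme R F y d k0) => //.
  - apply: (@ball_single y d B N) => //; first exact: PF.
      by move=> j nj; rewrite /d yout // mulr0 addr0.
    move=> j Bj; rewrite (_ : y j + d j = (1 + mu) * y j); last by rewrite /d; ring.
    by rewrite normrM yin // ger0_norm ?mulrDl ?mul1r ?mul; lra.
  - apply: (@ball_single y (fun k => - d k) B N) => //; first exact: PF.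
        by move=> k /hN ->; rewrite oppr0.
      by move=> j nj; rewrite /d yout // mulr0 oppr0 addr0.
    move=> j Bj; rewrite (_ : y j + - d j = (1 - mu) * y j); last by rewrite /d; ring.
    rewrite normrM yin // -[X in _ * X](ger0_norm (ltW lp)) -normrM mulrBl mul1r mul.
    by rewrite ler_norml; apply/andP; split; lra.
  - rewrite /d mulf_neq0 //; first by rewrite gt_eqF.
    by rewrite -normr_eq0 yin // gt_eqF.
have l_eq : l = 1 by apply/eqP; rewrite eq_le hl l1.
case: (pselect (maximal_elt F B)) => mB.
  exists B; split => //; exists y; split; last by split.
  move=> i Bi; have := yin i Bi; rewrite l_eq.
  case: (lerP 0 (y i)) => sg; first by rewrite ger0_norm // => ->; left.
  by rewrite ltr0_norm // => h; right; lra.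
have [k [nBk FBk]] : exists k, ~ B k /\ F (B `|` [set k]).
  apply: contrapT => H; apply: mB; split; first exact: PF.
  by move=> k nBk FBk; apply: H; exists k.
pose d j : R := if j == k then 1 else 0.
have hd : forall j, (k.+1 <= j)%N -> d j = 0.
  by move=> j kj; rewrite /d ifF //; apply/negbTE; rewrite neq_ltn kj orbT.
have dout : forall j, ~ (B `|` [set k]) j -> d j = 0.
  by move=> j nj; rewrite /d ifF //; apply/negbTE/eqP => jk; apply: nj; right.
have yout' : forall j, ~ (B `|` [set k]) j -> y j = 0.
  by move=> j nj; apply: yout => Bj; apply: nj; left.
apply: False_ind; apply: (@not_extreme R F y d k) => //.
- apply: (@ball_single y d (B `|` [set k]) k.+1) => //.
    by move=> j nj; rewrite dout // yout' // addr0.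
  move=> j [Bj|/= ->].
    have jk : j != k by apply/eqP => jk; apply: nBk; rewrite -jk.
    by rewrite /d (negbTE jk) addr0 yin // l_eq.
  by rewrite yout // /d eqxx add0r normr1.
- apply: (@ball_single y (fun j => - d j) (B `|` [set k]) k.+1) => //.
      by move=> j /hd ->; rewrite oppr0.
    by move=> j nj; rewrite dout // yout' // oppr0 addr0.
  move=> j [Bj|/= ->].
    have jk : j != k by apply/eqP => jk; apply: nBk; rewrite -jk.
    by rewrite /d (negbTE jk) oppr0 addr0 yin // l_eq.
  by rewrite yout // /d eqxx add0r normrN normr1.
- by rewrite /d eqxx oner_neq0.
Qed.

End Forward.


Unset Implicit Arguments.

Theorem mainTheorem10 (R : realType) (F : nat_family)
  (hfin : finite_family F) (hcomp : compact_family F) (hher : hereditary F)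
  (hcov : covers_omega F) (y : nat -> R) (hy : XF F y) :
  extreme_point (unit_ball F) y <->
  exists A, maximal_elt F A /\
    exists eps : nat -> R,
      (forall i, A i -> eps i = 1 \/ eps i = -1) /\
      (forall i, A i -> y i = eps i) /\ (forall i, ~ A i -> y i = 0).
Proof.
split.
  by move=> ext; exact: (forward hfin hher hcov hcomp ext).
move=> [A [mA [eps [He [Hin Hout]]]]].
exact: (extreme_of_maximal hher hcov hy mA He Hin Hout).
Qed.
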